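(* Let $A,B\in\mathbb{Z}$ with $4A^3+27B^2\ne0$, let $M$ be a positive integer with $\max\{10\sqrt{|A|},5\sqrt[3]{|B|}\}\le M$, let $D$ be a squarefree positive integer and $E_D: y^2=x^3+D^2Ax+D^3B$. Let $P\in E_D(\mathbb{Q})$ with $MD\le x(P)$. Then \[0.01\,x(P)\le x(3P)\le 0.27\,x(P).\] *)

(* Defs.v *)
From mathcomp Require Import all_boot all_order all_algebra.
Set Implicit Arguments. Unset Strict Implicit. Unset Printing Implicit Defensive.
Import Order.TTheory GRing.Theory Num.Theory.
Local Open Scope ring_scope.

Definition squarefree (n : nat) : Prop :=
  forall p : nat, prime p -> ~~ (p * p %| n)%N.

(* Rational points of the Weierstrass curve y^2 = x^3 + a x + b:
   None is the point at infinity O, Some (x, y) an affine point. *)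
Definition ec_point := option (rat * rat).

Definition on_curve (a b : rat) (P : ec_point) : Prop :=
  match P with
  | None => True
  | Some (x, y) => y ^+ 2 = x ^+ 3 + a * x + b
  end.

Definition ec_add (a : rat) (P Q : ec_point) : ec_point :=
  match P, Q with
  | None, _ => Q
  | _, None => P
  | Some (x1, y1), Some (x2, y2) =>
      if x1 == x2 then
        if y1 == - y2 then None
        else
          let l := (3 * x1 ^+ 2 + a) / (2 * y1) in
          let x3 := l ^+ 2 - x1 - x2 in
          Some (x3, l * (x1 - x3) - y1)
      else
        let l := (y2 - y1) / (x2 - x1) in
        let x3 := l ^+ 2 - x1 - x2 in
        Some (x3, l * (x1 - x3) - y1)
  end.

Definition ec_triple (a : rat) (P : ec_point) : ec_point :=
  ec_add a (ec_add a P P) P.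

(* Main.v *)
Require Import Defs.
From mathcomp Require Import all_boot all_order all_algebra.
From mathcomp Require Import lra ring.
Import Order.TTheory GRing.Theory Num.Theory.
Local Open Scope ring_scope.
Lemma b2 (u v cu cv : rat) : `|u| <= cu -> `|v| <= cv -> `|u * v| <= cu * cv.
Proof. move=> hu hv; rewrite normrM; apply: ler_pM; rewrite ?normr_ge0 //. Qed.
Lemma b3 (u : rat) c : `|u| <= c -> -c <= u /\ u <= c.
Proof. by rewrite ler_norml => /andP. Qed.
Lemma polyb (s r : rat) : -1/100 <= s -> s <= 1/100 -> -1/125 <= r -> r <= 1/125 ->
  let p := 3 + s in let q := 1 + s + r in let E := 12 * q - p^+2 in
  let N := E^+2 + 64 * q^+3 - 8 * p * q * E in
  0 < q /\ 0 < E /\ E^+2/100 <= N /\ N <= 27 * E^+2/100.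
Proof.
move=> h1 h2 h3 h4 p q E N; rewrite /N /E /q /p.
have hs : `|s| <= 1/100 by rewrite ler_norml; lra.
have hr : `|r| <= 1/125 by rewrite ler_norml; lra.
have s2 : 0 <= s^+2 by rewrite sqr_ge0.
have r2 : 0 <= r^+2 by rewrite sqr_ge0.
have s4 : 0 <= s^+4 by rewrite (exprM s 2 2) sqr_ge0.
have hsr := b2 _ _ _ _ hs hr.
have hss := b2 _ _ _ _ hs hs.
have hrr := b2 _ _ _ _ hr hr.
have hs3 := b2 _ _ _ _ hss hs.
have hs2r := b2 _ _ _ _ hss hr.
have hsr2 := b2 _ _ _ _ hs hrr.
have hr3 := b2 _ _ _ _ hrr hr.
have hs3r := b2 _ _ _ _ hs3 hr.
have hs4 := b2 _ _ _ _ hs3 hs.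
move/b3: hsr => [? ?]. move/b3: hss => [? ?]. move/b3: hrr => [? ?].
move/b3: hs3 => [? ?]. move/b3: hs2r => [? ?]. move/b3: hsr2 => [? ?].
move/b3: hr3 => [? ?]. move/b3: hs3r => [? ?]. move/b3: hs4 => [? ?].
split; first lra.
split; first lra.
split; lra.
Qed.


Lemma key2 (x y l d x1 : rat) : d != 0 -> x1 = l^+2 - x - x ->
  ((y - (l * d - y)) / d)^+2 - x1 - x = (4 * y^+2 - 4 * (y * l) * d) / d^+2 + x.
Proof. by move=> hd ->; field. Qed.

Lemma key (x y a b : rat) :
  let s := a / x^+2 in let r := b / x^+3 in
  let p := 3 + s in let q := 1 + s + r in let E := 12 * q - p^+2 in
  let N := E^+2 + 64 * q^+3 - 8 * p * q * E in
  x != 0 -> y != 0 -> q != 0 -> E != 0 -> y^+2 = x^+3 + a * x + b ->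
  let l := (3 * x^+2 + a) / (2 * y) in let x1 := l^+2 - x - x in
  let y1 := l * (x - x1) - y in
  x - x1 = x * E / (4 * q) /\ ((y - y1) / (x - x1))^+2 - x1 - x = x * N / E^+2.
Proof.
move=> s r p q E N hx hy hq hE hc l x1 y1.
have hy' : y^+2 = x^+3 * q.
  by rewrite hc /q /r /s; field; rewrite ?hx ?hy.
have hyl : y * l = x^+2 * p / 2 by rewrite /l /p /s; field; rewrite ?hx ?hy.
have hl2 : l^+2 = x * p^+2 / (4 * q).
  have -> : l^+2 = (y * l)^+2 / y^+2 by field; rewrite ?hx ?hy.
  by rewrite hyl hy'; field; rewrite ?hx ?hy ?hq.
have hd : x - x1 = x * E / (4 * q).
  by rewrite /x1 hl2 /E; field; rewrite ?hx ?hy ?hq.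
split => //.
have hd0 : x - x1 != 0 by rewrite hd !mulf_neq0 ?invr_eq0 ?mulf_neq0.
by rewrite /y1 (key2 x y l (x - x1) x1 hd0 (erefl x1)) hy' hyl hd /N /E; field; rewrite ?hx ?hy ?hq ?hE.
Qed.

Lemma divb (a X c : rat) : 0 < X -> 0 < c -> c * `|a| <= X -> -1/c <= a/X /\ a/X <= 1/c.
Proof.
move=> hX hc h.
have : `|a / X| <= 1 / c.
  rewrite normrM normfV (gtr0_norm hX) ler_pdivrMr // mul1r ler_pdivlMl //.
by rewrite ler_norml => /andP[h1 h2]; split => //; rewrite mulNr.
Qed.
Lemma scale2 (d m u x : rat) : 100 * u <= m^+2 -> m * d <= x -> 0 <= m * d -> 100 * (d^+2 * u) <= x^+2.
Proof.
move=> h1 h2 h3.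
rewrite mulrCA; apply: le_trans (ler_wpM2l (sqr_ge0 d) h1) _.
have := ler_pM h3 h3 h2 h2.
by rewrite -!expr2 exprMn mulrC.
Qed.
Lemma scale3 (d m u x : rat) : 0 <= d -> 125 * u <= m^+3 -> m * d <= x -> 0 <= m * d -> 125 * (d^+3 * u) <= x^+3.
Proof.
move=> hd h1 h2 h3.
rewrite mulrCA; apply: le_trans (ler_wpM2l (exprn_ge0 3 hd) h1) _.
have := ler_pM (mulr_ge0 h3 h3) h3 (ler_pM h3 h3 h2 h2) h2.
have -> : d^+3 * m^+3 = m * d * (m * d) * (m * d) by ring.
by have -> : x^+3 = x * x * x by ring.
Qed.


Lemma fin (x E N : rat) : 0 < x -> 0 < E -> E^+2/100 <= N -> N <= 27 * E^+2/100 ->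
  x / 100 <= x * N / E^+2 <= 27 * x / 100.
Proof.
move=> hx hE h1 h2.
have hE2 : 0 < E^+2 by rewrite exprn_gt0.
have k1 : 1/100 <= N / E^+2.
  by rewrite (ler_pdivlMr _ _ hE2) mul1r mulrC.
have k2 : N / E^+2 <= 27/100.
  by rewrite (ler_pdivrMr _ _ hE2) mulrAC.
have e1 : x / 100 = x * (1/100) by rewrite mul1r.
have e2 : 27 * x / 100 = x * (27/100) by rewrite mulrA (mulrC 27).
rewrite e1 e2 -mulrA.
by rewrite (ler_wpM2l (ltW hx) k1) (ler_wpM2l (ltW hx) k2).
Qed.


Theorem lemma3p8 (A B : int) (M D : nat) (x y : rat) :
  4 * A ^+ 3 + 27 * B ^+ 2 != 0 ->
  (0 < M)%N ->
  (* max{10 sqrt|A|, 5 cbrt|B|} <= M, i.e. 100|A| <= M^2 and 125|B| <= M^3 *)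
  100 * `|A| <= (M ^ 2)%:Z ->
  125 * `|B| <= (M ^ 3)%:Z ->
  (0 < D)%N -> squarefree D ->
  on_curve ((D ^ 2)%:R * A%:~R) ((D ^ 3)%:R * B%:~R) (Some (x, y)) ->
  (M * D)%:R <= x ->
  exists x3 y3 : rat,
    ec_triple ((D ^ 2)%:R * A%:~R) (Some (x, y)) = Some (x3, y3) /\
    x / 100 <= x3 <= 27 * x / 100.
Proof.
move=> _ hM hA hB hD _ /=.
set a := (D ^ 2)%:R * A%:~R; set b := (D ^ 3)%:R * B%:~R => hy hx.
have hMD : 0 <= (M * D)%:R :> rat by rewrite ler0n.
have hx0 : 0 < x.
  apply: lt_le_trans hx; rewrite ltr0n muln_gt0 hM hD //.
have hA' : 100 * `|A%:~R : rat| <= M%:R ^+ 2.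
  move: hA; rewrite -(ler_int rat) -intr_norm intrM -natrX; exact.
have hB' : 125 * `|B%:~R : rat| <= M%:R ^+ 3.
  move: hB; rewrite -(ler_int rat) -intr_norm intrM -natrX; exact.
have ha : 100 * `|a| <= x^+2.
  rewrite /a normrM normr_nat natrX; apply: (scale2 _ _ _ _ hA'); by rewrite -natrM.
have hb : 125 * `|b| <= x^+3.
  rewrite /b normrM normr_nat natrX; apply: (scale3 _ _ _ _ _ hB'); by rewrite ?ler0n -?natrM.
have hX2 : 0 < x^+2 by rewrite exprn_gt0.
have hX3 : 0 < x^+3 by rewrite exprn_gt0.
have h100 : (0 : rat) < 100 by lra.
have h125 : (0 : rat) < 125 by lra.
have [hs1 hs2] := divb _ _ _ hX2 h100 ha.
have [hr1 hr2] := divb _ _ _ hX3 h125 hb.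
set s := a / x^+2 in hs1 hs2; set r := b / x^+3 in hr1 hr2.
have [hq [hE [hN1 hN2]]] := polyb _ _ hs1 hs2 hr1 hr2.
have hxn : x != 0 by rewrite gt_eqF.
have hy0 : y != 0.
  have hy' : y^+2 = x^+3 * (1 + s + r) by rewrite hy /s /r; field; rewrite hxn.
  apply/eqP => y0; move: hy'; rewrite y0 expr0n /= => /esym /eqP.
  by rewrite mulf_eq0 (gt_eqF hX3) (gt_eqF hq).
have [hd hx3] := key x y a b hxn hy0 (lt0r_neq0 hq) (lt0r_neq0 hE) hy.
rewrite -/s -/r in hd hx3.
have hyy : (y == - y) = false.
  apply/negbTE; apply: contra hy0 => /eqP h; apply/eqP; lra.
have hxx : (((3 * x ^+ 2 + a) / (2 * y)) ^+ 2 - x - x == x) = false.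
  apply/negbTE; rewrite -subr_eq0 -opprB oppr_eq0 hd.
  apply: lt0r_neq0; apply: divr_gt0; [exact: mulr_gt0 | lra].
rewrite /ec_triple /ec_add eqxx hyy /= hxx.
eexists _, _; split; first reflexivity.
rewrite hx3; exact: fin.
Qed.
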